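(* Let $\mathbf A$ be a WD-algebra, $P$ a prime filter of $\mathbf A$ and $a,b\in A$. Then $a\leftarrow b\in P$ if and only if there exists a prime filter $Q$ of $\mathbf A$ such that $(P,Q)\in S_{\mathbf A}$, $a\in Q$ and $b\notin Q$.
   Context: A WD-algebra is an algebra $(A,\wedge,\vee,\leftarrow,0,1)$ such that $(A,\wedge,\vee,0,1)$ is a bounded distributive lattice and for all $a,b,c\in A$: $a\leftarrow a=0$; $(a\vee b)\leftarrow c=(a\leftarrow c)\vee(b\leftarrow c)$; $a\leftarrow(b\wedge c)=(a\leftarrow b)\vee(a\leftarrow c)$; $a\leftarrow c\le(a\leftarrow b)\vee(b\leftarrow c)$. For a prime filter $P$ and a filter $Q$ of $\mathbf A$, $(P,Q)\in S_{\mathbf A}$ iff for all $a,b\in A$, $a\in Q$ and $b\notin Q$ imply $a\leftarrow b\in P$. *)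

(* Defs.v *)
From Stdlib Require Import Classical.

Record WDAlgebra := {
  carrier :> Type;
  meet : carrier -> carrier -> carrier;
  join : carrier -> carrier -> carrier;
  larr : carrier -> carrier -> carrier;
  bot : carrier;
  top : carrier;
  meet_comm : forall a b, meet a b = meet b a;
  join_comm : forall a b, join a b = join b a;
  meet_assoc : forall a b c, meet a (meet b c) = meet (meet a b) c;
  join_assoc : forall a b c, join a (join b c) = join (join a b) c;
  meet_absorb : forall a b, meet a (join a b) = a;
  join_absorb : forall a b, join a (meet a b) = a;
  meet_join_distr : forall a b c, meet a (join b c) = join (meet a b) (meet a c);
  meet_top : forall a, meet a top = a;
  join_bot : forall a, join a bot = a;
  larr_self : forall a, larr a a = bot;
  larr_join_l : forall a b c, larr (join a b) c = join (larr a c) (larr b c);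
  larr_meet_r : forall a b c, larr a (meet b c) = join (larr a b) (larr a c);
  larr_trans : forall a b c,
      meet (larr a c) (join (larr a b) (larr b c)) = larr a c
}.

Definition le (A : WDAlgebra) (a b : A) : Prop := meet A a b = a.

Definition is_filter (A : WDAlgebra) (F : A -> Prop) : Prop :=
  F (top A) /\
  (forall a b : A, F a -> le A a b -> F b) /\
  (forall a b : A, F a -> F b -> F (meet A a b)).

Definition is_prime_filter (A : WDAlgebra) (F : A -> Prop) : Prop :=
  is_filter A F /\ ~ F (bot A) /\
  (forall a b : A, F (join A a b) -> F a \/ F b).

Definition S_rel (A : WDAlgebra) (P Q : A -> Prop) : Prop :=
  forall a b : A, Q a -> ~ Q b -> P (larr A a b).

(* Main.v *)
Require Import Defs.
From Stdlib Require Import Classical.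
From mathcomp Require classical_sets.

Section W.
Variable A : WDAlgebra.
Local Notation m := (meet A).
Local Notation j := (join A).
Local Notation l := (larr A).

Lemma m_idem x : m x x = x.
Proof.
  pose proof (meet_absorb A x (m x x)) as H.
  rewrite (join_absorb A x x) in H. exact H.
Qed.

Lemma le_refl x : le A x x.
Proof. apply m_idem. Qed.

Lemma le_trans x y z : le A x y -> le A y z -> le A x z.
Proof.
  unfold le; intros H1 H2. rewrite <- H1 at 1. rewrite <- meet_assoc, H2. exact H1.
Qed.

Lemma le_ml x y : le A (m x y) x.
Proof.
  unfold le. rewrite (meet_comm A x y), <- meet_assoc, m_idem. reflexivity.
Qed.

Lemma le_mr x y : le A (m x y) y.
Proof.
  unfold le. rewrite <- meet_assoc, m_idem. reflexivity.
Qed.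

Lemma le_glb c x y : le A c x -> le A c y -> le A c (m x y).
Proof.
  unfold le; intros H1 H2. rewrite meet_assoc, H1. exact H2.
Qed.

Lemma le_jr c d : le A c (j d c).
Proof. unfold le. rewrite join_comm. apply meet_absorb. Qed.

Lemma le_jl c d : le A c (j c d).
Proof. unfold le. apply meet_absorb. Qed.

Lemma bot_le x : le A (bot A) x.
Proof.
  unfold le. pose proof (meet_absorb A (bot A) x) as H.
  rewrite join_comm, join_bot in H. exact H.
Qed.

Lemma larr_mono1 x y z : le A x y -> le A (l x z) (l y z).
Proof.
  unfold le; intro H.
  assert (E : j y x = y).
  { rewrite <- H at 1. rewrite meet_comm. apply join_absorb. }
  rewrite <- E at 1. rewrite larr_join_l. apply le_jr.
Qed.

Lemma larr_anti2 x w w' : le A w w' -> le A (l x w') (l x w).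
Proof.
  unfold le; intro H. rewrite <- H at 1. rewrite larr_meet_r. apply le_jr.
Qed.

Lemma larr_le_bot x y : le A x y -> le A (l x y) (bot A).
Proof.
  intro H. pose proof (larr_anti2 x x y H) as H'. rewrite larr_self in H'. exact H'.
Qed.

Lemma larr_tr x y z : le A (l x z) (j (l x y) (l y z)).
Proof. unfold le. apply larr_trans. Qed.

Variable P : A -> Prop.
Hypothesis HP : is_prime_filter A P.

Definition R x y := ~ P (l x y).

Lemma Pup x y : P x -> le A x y -> P y.
Proof. destruct HP as [[_ [H _]] _]. apply H. Qed.

Lemma Pprime x y : P (j x y) -> P x \/ P y.
Proof. destruct HP as [_ [_ H]]. apply H. Qed.

Lemma Pbot : ~ P (bot A).
Proof. destruct HP as [_ [H _]]. exact H. Qed.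

Lemma R_mono h h' w : le A h' h -> R h w -> R h' w.
Proof. unfold R; intros H1 H2 H3. apply H2. eapply Pup; [exact H3|]. apply larr_mono1, H1. Qed.

Lemma R_le x y : le A x y -> R x y.
Proof. unfold R; intros H H3. apply Pbot. eapply Pup; [exact H3|]. apply larr_le_bot, H. Qed.

Lemma R_trans x y z : R x y -> R y z -> R x z.
Proof.
  unfold R; intros H1 H2 H3. destruct (Pprime _ _ (Pup _ _ H3 (larr_tr x y z))); auto.
Qed.

Lemma R_meet h w w' : R h w -> R h w' -> R h (m w w').
Proof.
  unfold R; intros H1 H2 H3. rewrite larr_meet_r in H3. destruct (Pprime _ _ H3); auto.
Qed.

Lemma R_join h h' w : R h w -> R h' w -> R (j h h') w.
Proof.
  unfold R; intros H1 H2 H3. rewrite larr_join_l in H3. destruct (Pprime _ _ H3); auto.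
Qed.

Variables a b : A.

Definition good (F : A -> Prop) :=
  is_filter A F /\ (forall x y, F x -> R x y -> F y) /\ ~ F b /\ F a.

Lemma good_upR F : (forall x y, F x -> R x y -> F y) ->
  (forall x y, F x -> le A x y -> F y).
Proof. intros H x y Hx Hl. apply (H x y Hx), R_le, Hl. Qed.

Definition ext (F : A -> Prop) y := fun w => exists f, F f /\ R (m f y) w.

Lemma ext_good F y : good F -> ~ ext F y b -> good (ext F y).
Proof.
  intros [[Ht [Hu Hm]] [HR [Hb Ha]]] Hn.
  split; [split; [|split]|split; [|split]]; auto.
  - exists (top A). split; auto. apply R_le; unfold le; apply meet_top.
  - intros x z [f [Hf Hr]] Hl. exists f. split; auto. eapply R_trans; [exact Hr|]. apply R_le, Hl.
  - intros x z [f [Hf Hr]] [f' [Hf' Hr']]. exists (m f f'). split; auto.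
    apply R_meet.
    + eapply R_mono; [|exact Hr]. apply le_glb.
      * eapply le_trans; [apply le_ml|apply le_ml].
      * apply le_mr.
    + eapply R_mono; [|exact Hr']. apply le_glb.
      * eapply le_trans; [apply le_ml|apply le_mr].
      * apply le_mr.
  - intros x z [f [Hf Hr]] Hr2. exists f. split; auto. eapply R_trans; eauto.
  - exists a. split; auto. apply R_le, le_ml.
Qed.

Lemma ext_sup F y : good F -> forall w, F w -> ext F y w.
Proof. intros _ w Hw. exists w. split; auto. apply R_le, le_ml. Qed.

Lemma ext_y F y : good F -> ext F y y.
Proof.
  intros [[Ht _] _]. exists (top A). split; auto. apply R_le, le_mr.
Qed.

Lemma max_prime F : good F ->
  (forall B, classical_sets.proper F B -> ~ good B) ->
  forall y z, F (j y z) -> F y \/ F z.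
Proof.
  intros HF Hmax y z Hyz.
  destruct (classic (F y)) as [|Hy]; auto.
  destruct (classic (F z)) as [|Hz]; auto.
  exfalso.
  assert (Ey : ext F y b).
  { apply NNPP; intro Hn. apply (Hmax (ext F y)); [|apply ext_good; auto].
    split; [intros w; apply ext_sup; auto|]. intro Hs. apply Hy, Hs, ext_y, HF. }
  assert (Ez : ext F z b).
  { apply NNPP; intro Hn. apply (Hmax (ext F z)); [|apply ext_good; auto].
    split; [intros w; apply ext_sup; auto|]. intro Hs. apply Hz, Hs, ext_y, HF. }
  destruct HF as [[Ht [Hu Hm]] [HR [Hb Ha]]].
  destruct Ey as [f [Hf Hr]]. destruct Ez as [f' [Hf' Hr']].
  apply Hb. apply (HR (m (m f f') (j y z))); [apply Hm; auto|].
  rewrite meet_join_distr. apply R_join.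
  - eapply R_mono; [|exact Hr]. apply le_glb.
    + eapply le_trans; [apply le_ml|apply le_ml].
    + apply le_mr.
  - eapply R_mono; [|exact Hr']. apply le_glb.
    + eapply le_trans; [apply le_ml|apply le_mr].
    + apply le_mr.
Qed.

Definition G := fun y => R a y.

Lemma G_good : P (l a b) -> good G.
Proof.
  intro Hab. unfold G. split; [split; [|split]|split; [|split]].
  - apply R_le. unfold le. apply meet_top.
  - intros x y Hx Hl. eapply R_trans; [exact Hx|]. apply R_le, Hl.
  - intros x y Hx Hy. apply R_meet; auto.
  - intros x y Hx Hy. eapply R_trans; eauto.
  - unfold R; auto.
  - apply R_le, le_refl.
Qed.

Definition Pz (X : A -> Prop) := (forall t, ~ X t) \/ good X.

Lemma exists_max : P (l a b) -> exists F, good F /\ forall B, classical_sets.proper F B -> ~ good B.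
Proof.
  intro Hab.
  destruct (@classical_sets.Zorn_bigcup A Pz) as [F [HF Hmax]].
  - intros C HC Htot.
    destruct (classic (exists X, C X /\ good X)) as [[X0 [CX0 GX0]]|Hno].
    + right.
      assert (Hmem : forall X, C X -> forall t, X t -> good X).
      { intros X CX t Xt. destruct (HC X CX) as [H|H]; [exfalso; eapply H; eauto|exact H]. }
      split; [split; [|split]|split; [|split]].
      * exists X0; auto. apply GX0.
      * intros x y [X CX Xx] Hl. exists X; auto.
        destruct (Hmem X CX x Xx) as [[_ [Hu _]] _]. eapply Hu; eauto.
      * intros x y [X CX Xx] [Y CY Yy].
        destruct (Htot X Y CX CY) as [S|S].
        -- exists Y; auto. destruct (Hmem Y CY y Yy) as [[_ [_ Hm]] _]. apply Hm; auto.
        -- exists X; auto. destruct (Hmem X CX x Xx) as [[_ [_ Hm]] _]. apply Hm; auto.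
      * intros x y [X CX Xx] Hr. exists X; auto.
        destruct (Hmem X CX x Xx) as [_ [HR _]]. eapply HR; eauto.
      * intros [X CX Xb]. destruct (Hmem X CX b Xb) as [_ [_ [H _]]]. auto.
      * exists X0; auto. apply GX0.
    + left. intros t [X CX Xt]. destruct (HC X CX) as [H|H]; [eapply H; eauto|].
      apply Hno. eauto.
  - destruct HF as [Hemp|Hg].
    + exfalso. apply (Hmax G); [|right; apply G_good, Hab].
      split; [intros t Ht; exfalso; eapply Hemp; eauto|].
      intro Hs. apply (Hemp a), Hs. apply (G_good Hab).
    + exists F. split; auto. intros B HB HgB. apply (Hmax B HB). right. exact HgB.
Qed.

End W.

Theorem corollary3p10 (A : WDAlgebra) (P : A -> Prop) (a b : A) :
  is_prime_filter A P ->
  (P (larr A a b) <->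
   exists Q : A -> Prop, is_prime_filter A Q /\ S_rel A P Q /\ Q a /\ ~ Q b).
Proof.
  intro HP. split.
  - intro Hab.
    destruct (exists_max A P HP a b Hab) as [F [HF Hmax]].
    pose proof (max_prime A P HP a b F HF Hmax) as Hpr.
    destruct HF as [HFf [HR [Hb Ha]]].
    exists F. split; [split; [exact HFf|split]|split; [|split]]; auto.
    + intro H0. apply Hb. destruct HFf as [_ [Hu _]]. eapply Hu; [exact H0|]. apply bot_le.
    + intros x y Hx Hy. apply NNPP. intro Hn. apply Hy. eapply HR; eauto.
  - intros [Q [_ [HS [Ha Hb]]]]. apply HS; auto.
Qed.
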